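(* Let $\nu>0$, $\Delta t>0$, $\delta\in(0,1)$, and let $k$ be a time level at which the time step bound $$\Delta t\le\frac{\delta}{2\nu}\Big[\max_{i=1,\dots,N}\sum_{j\ne i}V_j\frac{|\dot w_h(|x^k_i-x^k_j|)|}{|x^k_i-x^k_j|}\Big]^{-1}$$ holds. Then for every $\Lambda\subset I_N$ and every $\phi\in V^k(\Lambda)^d$, $$\|\Delta_h\phi\|_{2,\Lambda}^2\le\frac{2\delta}{\Delta t\,\nu}\,|\phi|_{1,k,\Lambda}^2,$$ where $(\Delta_h\phi)_i=2\sum_{j\in\Lambda\setminus\{i\}}V_j\frac{\phi_i-\phi_j}{|x^k_i-x^k_j|}\frac{x^k_i-x^k_j}{|x^k_i-x^k_j|}\cdot\nabla w_h(|x^k_i-x^k_j|)$ for $i\in\Lambda$.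
   Context: Let $d\in\{2,3\}$. Reference weight function $w\in C^2([0,\infty))$ with some $r_0>0$: $w>0$ on $(0,r_0)$, $w=0$ on $[r_0,\infty)$, $\dot w<0$ on $(0,r_0)$, $\dot w(0)=0$, $\dot w=0$ on $[r_0,\infty)$, $\int_{\mathbb{R}^d}w(|x|)dx=1$. For $h>0$, $w_h(r)=h^{-d}w(r/h)$ with derivative $\dot w_h$; for $x\ne y$, $\nabla w_h(|x-y|)=\dot w_h(|x-y|)\frac{x-y}{|x-y|}$. $N\in\mathbb{N}$, $I_N=\{1,\dots,N\}$, particle volumes $V_1,\dots,V_N>0$, pairwise distinct particle positions $x^k_1,\dots,x^k_N\in\mathbb{R}^d$. $V^k(\Lambda)^m$ is the space of $\mathbb{R}^m$-valued functions on $\{x^k_i\}_{i\in\Lambda}$ (values $\phi_i$). Discrete $L^2$ norm $\|\phi\|_{2,\Lambda}=(\sum_{i\in\Lambda}V_i|\phi_i|^2)^{1/2}$; discrete semi-norm $|\phi|_{1,k,\Lambda}=\big(\sum_{i\in\Lambda}V_i\sum_{j\in\Lambda\setminus\{i\}}V_j\frac{|\phi_i-\phi_j|^2}{|x^k_i-x^k_j|}|\dot w_h(|x^k_i-x^k_j|)|\big)^{1/2}$. *)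

(* Defs.v *)
From HB Require Import structures.
From mathcomp Require Import all_boot all_order all_algebra.
From mathcomp Require Import all_classical all_reals all_analysis.
Set Implicit Arguments. Unset Strict Implicit. Unset Printing Implicit Defensive.
Import Order.TTheory GRing.Theory Num.Theory numFieldNormedType.Exports.
Local Open Scope ring_scope.

Section Defs.
Variable R : realType.

Definition dotp (d : nat) (u v : 'rV[R]_d) : R := \sum_(k < d) u 0 k * v 0 k.
Definition enorm (d : nat) (u : 'rV[R]_d) : R := Num.sqrt (dotp u u).

Definition wh (d : nat) (w : R -> R) (h : R) (r : R) : R := h ^- d * w (r / h).
Definition dwh (d : nat) (w : R -> R) (h : R) : R -> R := derive1 (wh d w h).

Definition grad_wh (d : nat) (w : R -> R) (h : R) (x y : 'rV[R]_d) : 'rV[R]_d :=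
  (dwh d w h (enorm (x - y)) / enorm (x - y)) *: (x - y).

(* Surface area of the unit sphere S^{d-1} for d = 2, 3. *)
Definition sphere_area (d : nat) : R := if d == 2%N then 2 * pi else 4 * pi.

(* The reference weight function assumptions (w : R -> R; only its values on
   [0, oo) matter; C^2 regularity is required on all of R). *)
Definition ref_weight (d : nat) (w : R -> R) (r0 : R) : Prop :=
  0 < r0 /\
      ((forall r, derivable w r 1) /\ (forall r, derivable (derive1 w) r 1)
        /\ continuous (derive1 (derive1 w) : R -> R)) /\
      (forall r, 0 < r < r0 -> 0 < w r) /\
      (forall r, r0 <= r -> w r = 0) /\
      (forall r, 0 < r < r0 -> derive1 w r < 0) /\
      derive1 w 0 = 0 /\
      (forall r, r0 <= r -> derive1 w r = 0) /\
      (* \int_{R^d} w(|x|) dx = 1, written in polar coordinates *)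
      (\int[lebesgue_measure]_(r in `[0%R, r0%R]%classic)
          (sphere_area d * w r * r ^+ d.-1)%:E = 1%E)%E.

Definition l2sq (d N : nat) (V : 'I_N -> R) (L : {set 'I_N}) (phi : 'I_N -> 'rV[R]_d) : R :=
  \sum_(i in L) V i * dotp (phi i) (phi i).

Definition h1sq (d N : nat) (w : R -> R) (h : R) (V : 'I_N -> R)
  (x : 'I_N -> 'rV[R]_d) (L : {set 'I_N}) (phi : 'I_N -> 'rV[R]_d) : R :=
  \sum_(i in L) V i * \sum_(j in L :\ i)
     V j * dotp (phi i - phi j) (phi i - phi j) / enorm (x i - x j)
         * `| dwh d w h (enorm (x i - x j)) |.

Definition lap (d N : nat) (w : R -> R) (h : R) (V : 'I_N -> R)
  (x : 'I_N -> 'rV[R]_d) (L : {set 'I_N}) (phi : 'I_N -> 'rV[R]_d) (i : 'I_N) : 'rV[R]_d :=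
  2 *: \sum_(j in L :\ i)
     (V j / enorm (x i - x j) *
       dotp ((enorm (x i - x j))^-1 *: (x i - x j)) (grad_wh w h (x i) (x j)))
       *: (phi i - phi j).

Definition Mstab (d N : nat) (w : R -> R) (h : R) (V : 'I_N -> R)
  (x : 'I_N -> 'rV[R]_d) : R :=
  \big[Num.max/0]_(i < N) \sum_(j < N | j != i)
     V j * `| dwh d w h (enorm (x i - x j)) | / enorm (x i - x j).

End Defs.

(* Main.v *)
Require Import Defs.
From HB Require Import structures.
From mathcomp Require Import all_boot all_order all_algebra.
From mathcomp Require Import all_classical all_reals all_analysis.
From mathcomp Require Import ring lra.
Import Order.TTheory GRing.Theory Num.Theory.
Local Open Scope ring_scope.

Lemma cs_sum (R : realFieldType) (I : finType) (P : pred I) (a y : I -> R) :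
  (forall j, P j -> 0 <= a j) ->
  (\sum_(j | P j) a j * y j) ^+ 2 <=
  (\sum_(j | P j) a j) * (\sum_(j | P j) a j * y j ^+ 2).
Proof.
move=> a0.
set A := \sum_(j | P j) a j; set B := \sum_(j | P j) a j * y j ^+ 2;
set S := \sum_(j | P j) a j * y j.
have H : 0 <= \sum_(j | P j) \sum_(l | P l) a j * a l * (y j - y l) ^+ 2.
  apply: sumr_ge0 => j Pj; apply: sumr_ge0 => l Pl.
  by rewrite mulr_ge0 ?sqr_ge0 // mulr_ge0 // a0.
have HX : \sum_(j | P j) \sum_(l | P l)
    (a j * y j ^+ 2 * a l - a j * y j * (a l * y l)) = B * A - S * S.
  rewrite /B /S !mulr_suml -sumrB; apply: eq_bigr => j _.
  by rewrite !mulr_sumr -sumrB.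
have E : \sum_(j | P j) \sum_(l | P l) a j * a l * (y j - y l) ^+ 2 =
    2 * (A * B - S ^+ 2).
  transitivity (\sum_(j | P j) \sum_(l | P l)
    (a j * y j ^+ 2 * a l - a j * y j * (a l * y l)) +
    \sum_(j | P j) \sum_(l | P l)
    (a l * y l ^+ 2 * a j - a l * y l * (a j * y j))).
    rewrite -big_split; apply: eq_bigr => j _; rewrite -big_split.
    by apply: eq_bigr => l _ /=; ring.
  rewrite [X in _ + X]exchange_big /= HX; ring.
rewrite -subr_ge0; move: H; rewrite E pmulr_rge0 //.
Qed.

Lemma cs_sum2 (R : realFieldType) (I : finType) (P : pred I) (a c y : I -> R) :
  (forall j, P j -> `|c j| <= a j) ->
  (\sum_(j | P j) c j * y j) ^+ 2 <=
  (\sum_(j | P j) a j) * (\sum_(j | P j) a j * y j ^+ 2).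
Proof.
move=> ca.
have a0 : forall j, P j -> 0 <= a j by move=> j Pj; exact: le_trans (ca j Pj).
have h1 : `|\sum_(j | P j) c j * y j| <= \sum_(j | P j) a j * `|y j|.
  apply: le_trans (ler_norm_sum _ _ _) _; apply: ler_sum => j Pj.
  by rewrite normrM ler_wpM2r // ca.
have h2 := @cs_sum _ _ P a (fun j => `|y j|) a0.
have e : forall u : R, `|u| ^+ 2 = u ^+ 2 by move=> u; rewrite real_normK ?num_real.
under [X in _ <= _ * X]eq_bigr => j _ do rewrite -e.
rewrite -e; apply: le_trans h2.
have s0 : 0 <= `|\sum_(j | P j) c j * y j| by [].
set u := `|_| in h1 s0 *; set v := \sum_(j | P j) _ in h1 *.
nra.
Qed.
Lemma dotpZl (R : realType) d (k : R) (u v : 'rV[R]_d) : dotp (k *: u) v = k * dotp u v.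
Proof. rewrite /dotp mulr_sumr; apply: eq_bigr => i _; rewrite mxE; ring. Qed.
Lemma dotpZr (R : realType) d (k : R) (u v : 'rV[R]_d) : dotp u (k *: v) = k * dotp u v.
Proof. rewrite /dotp mulr_sumr; apply: eq_bigr => i _; rewrite mxE; ring. Qed.
Lemma dotp_ge0 (R : realType) d (u : 'rV[R]_d) : 0 <= dotp u u.
Proof. by apply: sumr_ge0 => i _; rewrite -expr2 sqr_ge0. Qed.

Lemma coefE (R : realType) d (w : R -> R) h (V : R) (x y : 'rV[R]_d) :
  V / enorm (x - y) * dotp ((enorm (x - y))^-1 *: (x - y)) (grad_wh w h x y)
  = V / enorm (x - y) * dwh d w h (enorm (x - y)).
Proof.
rewrite /grad_wh dotpZl dotpZr.
have e : dotp (x - y) (x - y) = enorm (x - y) ^+ 2 by rewrite sqr_sqrtr // dotp_ge0.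
rewrite e; set r := enorm (x - y); set D := dwh d w h r.
have [->|r0] := eqVneq r 0; first by rewrite invr0 !(mulr0, mul0r).
by field.
Qed.

Theorem lemma5 (R : realType) (d : nat) (hd : d = 2%N \/ d = 3%N)
  (w : R -> R) (r0 : R) (hw : ref_weight d w r0)
  (h : R) (hh : 0 < h)
  (N : nat) (V : 'I_N -> R) (hV : forall i, 0 < V i)
  (x : 'I_N -> 'rV[R]_d) (hx : injective x)
  (nu dt delta : R) (hnu : 0 < nu) (hdt : 0 < dt) (hdl : 0 < delta < 1)
  (hstep : 2 * nu * dt * Mstab w h V x <= delta) :
  forall (L : {set 'I_N}) (phi : 'I_N -> 'rV[R]_d),
    l2sq V L (lap w h V x L phi)
      <= 2 * delta / (dt * nu) * h1sq w h V x L phi.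
Proof.
move=> L phi.
set M := Mstab w h V x.
pose T i := \sum_(j in L :\ i) V j * dotp (phi i - phi j) (phi i - phi j)
   / enorm (x i - x j) * `|dwh d w h (enorm (x i - x j))|.
have T0 : forall i, 0 <= T i.
  move=> i; apply: sumr_ge0 => j _.
  by rewrite !mulr_ge0 ?invr_ge0 ?dotp_ge0 ?sqrtr_ge0 ?normr_ge0 ?(ltW (hV _)).
have key : forall i, dotp (lap w h V x L phi i) (lap w h V x L phi i) <= 4 * M * T i.
  move=> i.
  pose c j := V j / enorm (x i - x j) * dwh d w h (enorm (x i - x j)).
  pose a j := V j / enorm (x i - x j) * `|dwh d w h (enorm (x i - x j))|.
  have ca : forall j, j \in L :\ i -> `|c j| <= a j.
    move=> j _; rewrite /c /a normrM ger0_norm //.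
    by rewrite divr_ge0 ?sqrtr_ge0 ?(ltW (hV _)).
  have A_le : \sum_(j in L :\ i) a j <= M.
    apply: (le_trans (y := \sum_(j < N | j != i)
       V j * `|dwh d w h (enorm (x i - x j))| / enorm (x i - x j))).
      rewrite [X in X <= _]big_mkcond [X in _ <= X]big_mkcond /=.
      apply: ler_sum => j _; rewrite in_setD1.
      case: (j != i) => //=; case: (j \in L) => /=.
        by rewrite /a mulrAC lexx.
      by rewrite !mulr_ge0 ?invr_ge0 ?sqrtr_ge0 ?normr_ge0 ?(ltW (hV _)).
    exact: (le_bigmax _ (fun i0 : 'I_N => \sum_(j < N | j != i0)
       V j * `|dwh d w h (enorm (x i0 - x j))| / enorm (x i0 - x j)) i).
  have comp : forall k, lap w h V x L phi i 0 k =
      2 * \sum_(j in L :\ i) c j * (phi i - phi j) 0 k.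
    move=> k; rewrite /lap mxE summxE; congr (_ * _); apply: eq_bigr => j _.
    by rewrite mxE coefE.
  have -> : dotp (lap w h V x L phi i) (lap w h V x L phi i) =
      \sum_k 4 * (\sum_(j in L :\ i) c j * (phi i - phi j) 0 k) ^+ 2.
    by rewrite /dotp; apply: eq_bigr => k _; rewrite comp; ring.
  apply: (le_trans (y := \sum_(k < d) 4 * ((\sum_(j in L :\ i) a j) *
      (\sum_(j in L :\ i) a j * ((phi i - phi j) 0 k) ^+ 2)))).
    apply: ler_sum => k _; apply: ler_wpM2l => //.
    exact: cs_sum2.
  rewrite -!mulr_sumr exchange_big /= mulrA.
  have -> : T i = \sum_(j in L :\ i) \sum_(k < d) a j * (phi i - phi j) 0 k ^+ 2.
    apply: eq_bigr => j _; rewrite -mulr_sumr /a /dotp.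
    under [X in _ = _ * X]eq_bigr => k _ do rewrite expr2.
    ring.
  apply: ler_wpM2r.
    apply: sumr_ge0 => j _; apply: sumr_ge0 => k _; apply: mulr_ge0; last exact: sqr_ge0.
    by rewrite /a /= !mulr_ge0 ?normr_ge0 ?invr_ge0 ?sqrtr_ge0 ?(ltW (hV _)).
  by rewrite ler_pM2l.
apply: (le_trans (y := \sum_(i in L) V i * (4 * M * T i))).
  rewrite /l2sq; apply: ler_sum => i _; apply: ler_wpM2l; [exact: ltW | exact: key].
under eq_bigr => i _ do rewrite mulrCA.
rewrite -mulr_sumr; apply: ler_wpM2r.
  by apply: sumr_ge0 => i _; apply: mulr_ge0; [exact: ltW | exact: T0].
rewrite ler_pdivlMr ?mulr_gt0 //.
have -> : 4 * M * (dt * nu) = 2 * (2 * nu * dt * M) by ring.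
by rewrite ler_pM2l.
Qed.
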